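(* Let $(X,\mu)$ be a measure space with $\mu$ nonatomic and $\mu\neq 0$, let $\mathcal{H}$ be a Hilbert space, and let $(e_x)_{x\in X}$ be a norm-bounded family in $\mathcal{H}$. Suppose that for $\mu$-almost every $x\in X$, for $\mu$-almost every $y\in X$, $\langle e_x,e_y\rangle=0$. Then for every $f\in\mathcal{H}$, $\langle f,e_x\rangle = 0$ for $\mu$-almost every $x\in X$.
   Context: Here ''for $\mu$-almost every $x$, $P(x)$'' means that the set of $x$ where $P(x)$ fails is contained in a measurable $\mu$-null set (the set itself need not be measurable); in the hypothesis, this is required of the set of $x$ for which $\{y : \langle e_x,e_y\rangle\neq 0\}$ is not contained in a null set. *)

(* Defs.v *)
From Stdlib Require Import Reals.
Open Scope R_scope.

Inductive ereal : Type := Fin (r : R) | PInf.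

Definition ereal_le (a b : ereal) : Prop :=
  match a, b with
  | Fin x, Fin y => x <= y
  | _, PInf => True
  | PInf, Fin _ => False
  end.

Definition ereal_lt (a b : ereal) : Prop :=
  match a, b with
  | Fin x, Fin y => x < y
  | Fin _, PInf => True
  | PInf, _ => False
  end.

Definition fin_part (a : ereal) : R := match a with Fin r => r | PInf => 0 end.

Definition esum_to (a : nat -> ereal) (s : ereal) : Prop :=
  match s with
  | Fin l => (forall n, a n <> PInf) /\
             Un_cv (fun N => sum_f_R0 (fun n => fin_part (a n)) N) l
  | PInf => (exists n, a n = PInf) \/
            ((forall n, a n <> PInf) /\
             cv_infty (fun N => sum_f_R0 (fun n => fin_part (a n)) N))
  end.

Record measure_space (X : Type) : Type := MeasureSpace {
  measurable : (X -> Prop) -> Prop;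
  measurable_empty : measurable (fun _ => False);
  measurable_compl : forall A, measurable A -> measurable (fun x => ~ A x);
  measurable_union : forall A : nat -> X -> Prop,
      (forall n, measurable (A n)) -> measurable (fun x => exists n, A n x);
  mu : (X -> Prop) -> ereal;
  mu_nonneg : forall A, measurable A -> ereal_le (Fin 0) (mu A);
  mu_empty : mu (fun _ => False) = Fin 0;
  mu_sigma_additive : forall A : nat -> X -> Prop,
      (forall n, measurable (A n)) ->
      (forall n m x, n <> m -> A n x -> A m x -> False) ->
      esum_to (fun n => mu (A n)) (mu (fun x => exists n, A n x))
}.
Arguments measurable {X} _ _.
Arguments mu {X} _ _.

Definition nonatomic {X : Type} (M : measure_space X) : Prop :=
  forall A, measurable M A -> ereal_lt (Fin 0) (mu M A) ->
    exists B, measurable M B /\ (forall x, B x -> A x) /\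
              ereal_lt (Fin 0) (mu M B) /\ ereal_lt (mu M B) (mu M A).

Definition nonzero_measure {X : Type} (M : measure_space X) : Prop :=
  exists A, measurable M A /\ mu M A <> Fin 0.

(* "for mu-almost every x, P x": the set where P fails is contained in a
   measurable mu-null set (that set itself need not be measurable). *)
Definition ae {X : Type} (M : measure_space X) (P : X -> Prop) : Prop :=
  exists N, measurable M N /\ mu M N = Fin 0 /\ (forall x, ~ P x -> N x).

Record C : Type := mkC { Cre : R; Cim : R }.
Definition C0 : C := mkC 0 0.
Definition Cadd (a b : C) : C := mkC (Cre a + Cre b) (Cim a + Cim b).
Definition Cmul (a b : C) : C :=
  mkC (Cre a * Cre b - Cim a * Cim b) (Cre a * Cim b + Cim a * Cre b).
Definition Cconj (a : C) : C := mkC (Cre a) (- Cim a).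

(* inner product linear in the first argument, conjugate-linear in the second *)
Record hilbert_space : Type := HilbertSpace {
  hcarrier :> Type;
  hadd : hcarrier -> hcarrier -> hcarrier;
  hzero : hcarrier;
  hopp : hcarrier -> hcarrier;
  hscal : C -> hcarrier -> hcarrier;
  inner : hcarrier -> hcarrier -> C;
  hadd_assoc : forall u v w, hadd u (hadd v w) = hadd (hadd u v) w;
  hadd_comm : forall u v, hadd u v = hadd v u;
  hadd_zero : forall u, hadd u hzero = u;
  hadd_opp : forall u, hadd u (hopp u) = hzero;
  hscal_one : forall u, hscal (mkC 1 0) u = u;
  hscal_assoc : forall a b u, hscal a (hscal b u) = hscal (Cmul a b) u;
  hscal_distr_vec : forall a u v, hscal a (hadd u v) = hadd (hscal a u) (hscal a v);
  hscal_distr_scal : forall a b u, hscal (Cadd a b) u = hadd (hscal a u) (hscal b u);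
  inner_add_l : forall u v w, inner (hadd u v) w = Cadd (inner u w) (inner v w);
  inner_scal_l : forall a u w, inner (hscal a u) w = Cmul a (inner u w);
  inner_conj_sym : forall u v, inner v u = Cconj (inner u v);
  inner_pos : forall u, Cim (inner u u) = 0 /\ 0 <= Cre (inner u u);
  inner_definite : forall u, Cre (inner u u) = 0 -> u = hzero;
  hcomplete : forall s : nat -> hcarrier,
    (forall eps, eps > 0 -> exists N, forall n m, (n >= N)%nat -> (m >= N)%nat ->
        sqrt (Cre (inner (hadd (s n) (hopp (s m))) (hadd (s n) (hopp (s m))))) < eps) ->
    exists l, forall eps, eps > 0 -> exists N, forall n, (n >= N)%nat ->
        sqrt (Cre (inner (hadd (s n) (hopp l)) (hadd (s n) (hopp l)))) < eps
}.
Arguments hadd {h} _ _.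
Arguments hzero {h}.
Arguments hopp {h} _.
Arguments hscal {h} _ _.
Arguments inner {h} _ _.

Definition hnorm {H : hilbert_space} (u : H) : R := sqrt (Cre (inner u u)).

(* Main.v *)
Require Import Defs.
From Stdlib Require Import Reals.
From Stdlib Require Import Lra Lia List Classical FunctionalExtensionality PropExtensionality ClassicalEpsilon.
Open Scope R_scope.

Lemma C_eq (a b : Defs.C) : Cre a = Cre b -> Cim a = Cim b -> a = b.
Proof. destruct a, b; simpl; intros -> ->; reflexivity. Qed.

Lemma inner_zero_l (H : hilbert_space) (w : H) : inner hzero w = C0.
Proof.
  pose proof (inner_add_l H hzero hzero w) as E.
  rewrite hadd_zero in E.
  destruct (inner hzero w) as [r i]; unfold Cadd in E; simpl in E.
  injection E; intros; apply C_eq; simpl; lra.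
Qed.

Lemma inner_zero_r (H : hilbert_space) (w : H) : inner w hzero = C0.
Proof.
  rewrite (inner_conj_sym H hzero w), inner_zero_l.
  apply C_eq; simpl; lra.
Qed.

Lemma inner_add_r (H : hilbert_space) (w u v : H) :
  inner w (hadd u v) = Cadd (inner w u) (inner w v).
Proof.
  rewrite (inner_conj_sym H (hadd u v) w), inner_add_l.
  rewrite (inner_conj_sym H u w), (inner_conj_sym H v w).
  destruct (inner u w), (inner v w); apply C_eq; simpl; lra.
Qed.

Lemma inner_scal_r (H : hilbert_space) (w : H) a (u : H) :
  inner w (hscal a u) = Cmul (Cconj a) (inner w u).
Proof.
  rewrite (inner_conj_sym H (hscal a u) w), inner_scal_l.
  rewrite (inner_conj_sym H u w).
  destruct a, (inner u w); apply C_eq; simpl; lra.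
Qed.

Fixpoint gsum {H : hilbert_space} (f : H) (l : list H) : H :=
  match l with nil => hzero | v :: l' => hadd (hscal (inner f v) v) (gsum f l') end.
Fixpoint orth {H : hilbert_space} (l : list H) : Prop :=
  match l with nil => True | v :: l' => (forall w, In w l' -> inner v w = C0) /\ orth l' end.
Definition nsq (a : Defs.C) := Cre a * Cre a + Cim a * Cim a.
Fixpoint sumsq {H : hilbert_space} (f : H) (l : list H) : R :=
  match l with nil => 0 | v :: l' => nsq (inner f v) + sumsq f l' end.

Lemma nsq_nonneg a : 0 <= nsq a.
Proof. unfold nsq; nra. Qed.

Lemma sumsq_nonneg (H : hilbert_space) (f : H) l : 0 <= sumsq f l.
Proof. induction l; simpl; [lra|]. pose proof (nsq_nonneg (inner f a)); lra. Qed.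

Lemma inner_v_gsum (H : hilbert_space) (f v : H) l :
  (forall w, In w l -> inner v w = C0) -> inner v (gsum f l) = C0.
Proof.
  induction l as [|a l IH]; simpl; intros Hw.
  - apply inner_zero_r.
  - rewrite inner_add_r, inner_scal_r, (Hw a (or_introl eq_refl)), IH by auto.
    apply C_eq; simpl; ring.
Qed.

Lemma re_f_gsum (H : hilbert_space) (f : H) l : Cre (inner f (gsum f l)) = sumsq f l.
Proof.
  induction l as [|a l IH]; simpl.
  - rewrite inner_zero_r; reflexivity.
  - rewrite inner_add_r, inner_scal_r. unfold Cadd at 1. simpl Cre. rewrite IH.
    unfold nsq. destruct (inner f a); simpl; ring.
Qed.

Lemma re_gsum_gsum (H : hilbert_space) (f : H) l b :
  orth l -> (forall v, In v l -> Cre (inner v v) <= b) ->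
  Cre (inner (gsum f l) (gsum f l)) <= b * sumsq f l.
Proof.
  induction l as [|v l IH]; simpl; intros Hoo Hb.
  - rewrite inner_zero_r; simpl; lra.
  - destruct Hoo as [Ho Hol]. pose proof (IH Hol (fun w h => Hb w (or_intror h))) as IH'.
    pose proof (Hb v (or_introl eq_refl)) as Hv.
    rewrite !inner_add_l, !inner_add_r, !inner_scal_l, !inner_scal_r.
    rewrite (inner_conj_sym H v (gsum f l)), (inner_v_gsum H f v l Ho).
    destruct (inner_pos H v) as [Hi Hr].
    revert IH' Hv Hi Hr.
    generalize (inner (gsum f l) (gsum f l)) (inner v v) (inner f v).
    intros [gr gi] [vr vi] [ar ai]; unfold nsq; simpl; intros.
    subst vi. nra.
Qed.

Lemma bessel (H : hilbert_space) (f : H) l b :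
  0 < b -> orth l -> (forall v, In v l -> Cre (inner v v) <= b) ->
  sumsq f l <= b * Cre (inner f f).
Proof.
  intros hb Ho Hb.
  pose proof (re_gsum_gsum H f l b Ho Hb) as HG.
  pose proof (re_f_gsum H f l) as HF.
  pose proof (sumsq_nonneg H f l) as HS.
  set (t := - / b).
  assert (htb : t * b = -1) by (unfold t; field; lra).
  destruct (inner_pos H (hadd f (hscal (mkC t 0) (gsum f l)))) as [_ Hp].
  rewrite !inner_add_l, !inner_add_r, !inner_scal_l, !inner_scal_r in Hp.
  rewrite (inner_conj_sym H f (gsum f l)) in Hp.
  revert Hp HG HF.
  generalize (inner f f) (inner f (gsum f l)) (inner (gsum f l) (gsum f l)) (sumsq f l).
  intros [fr fi] [xr xi] [gr gi] S; simpl; intros Hp HG HF. subst xr.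
  assert (h1 : t * t * gr <= t * t * (b * S)) by (apply Rmult_le_compat_l; nra).
  assert (h2 : t * t * (b * S) = - t * S) by (replace (t * t * (b * S)) with (t * (t * b) * S) by ring; rewrite htb; ring).
  assert (h3 : 0 <= fr + t * S) by nra.
  assert (h4 : 0 <= b * (fr + t * S)) by (apply Rmult_le_pos; lra).
  replace (b * (fr + t * S)) with (b * fr + (t * b) * S) in h4 by ring.
  rewrite htb in h4. lra.
Qed.

Lemma sumsq_ge (H : hilbert_space) (f : H) l d :
  (forall v, In v l -> d <= nsq (inner f v)) -> INR (length l) * d <= sumsq f l.
Proof.
  induction l as [|v l IH]; intros Hd; cbn [length sumsq].
  - simpl; lra.
  - rewrite S_INR. pose proof (Hd v (or_introl eq_refl)).
    pose proof (IH (fun w h => Hd w (or_intror h))). lra.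
Qed.

Lemma set_ext {X : Type} (A B : X -> Prop) : (forall x, A x <-> B x) -> A = B.
Proof. intros h; apply functional_extensionality; intros x; apply propositional_extensionality; auto. Qed.

Lemma meas_union2 {X} (M : measure_space X) A B :
  measurable M A -> measurable M B -> measurable M (fun x => A x \/ B x).
Proof.
  intros hA hB.
  pose (D := fun n : nat => match n with 0%nat => A | _ => B end).
  assert (hD : measurable M (fun x => exists n, D n x)) by
    (apply measurable_union; intros [|n]; simpl; auto).
  assert (E : (fun x => exists n, D n x) = (fun x => A x \/ B x)).
  { apply set_ext; intros x; split.
    - intros [[|n] h]; simpl in h; auto.
    - intros [h|h]; [exists 0%nat | exists 1%nat]; simpl; auto. }
  rewrite <- E; exact hD.
Qed.

Lemma meas_inter {X} (M : measure_space X) A B :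
  measurable M A -> measurable M B -> measurable M (fun x => A x /\ B x).
Proof.
  intros hA hB.
  pose proof (measurable_compl X M _ (meas_union2 M _ _ (measurable_compl X M _ hA) (measurable_compl X M _ hB))) as h.
  assert (E : (fun x => ~ (~ A x \/ ~ B x)) = (fun x => A x /\ B x)).
  { apply set_ext; intros x; split; [|tauto].
    intros h'; destruct (classic (A x)), (classic (B x)); tauto. }
  rewrite <- E; exact h.
Qed.

Lemma fin_part_nonneg {X} (M : measure_space X) A : measurable M A -> 0 <= fin_part (mu M A).
Proof.
  intros h; pose proof (mu_nonneg X M A h) as h'.
  destruct (mu M A); simpl in *; lra.
Qed.

Lemma mu_mono {X} (M : measure_space X) A B :
  measurable M A -> measurable M B -> (forall x, A x -> B x) -> ereal_le (mu M A) (mu M B).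
Proof.
  intros hA hB hAB.
  pose (D := fun n : nat => match n with 0%nat => A | 1%nat => fun x => B x /\ ~ A x | _ => fun _ => False end).
  assert (hD : forall n, measurable M (D n)).
  { intros [|[|n]]; simpl; auto.
    - apply meas_inter; auto. apply measurable_compl; auto.
    - apply measurable_empty. }
  assert (hdis : forall n m x, n <> m -> D n x -> D m x -> False).
  { intros [|[|n]] [|[|m]] x hnm; simpl; try tauto; lia. }
  pose proof (mu_sigma_additive X M D hD hdis) as hs.
  assert (E : (fun x => exists n, D n x) = B).
  { apply set_ext; intros x; split.
    - intros [[|[|n]] h]; simpl in h; intuition.
    - intros hb; destruct (classic (A x)); [exists 0%nat | exists 1%nat]; simpl; auto. }
  rewrite E in hs.
  destruct (mu M B) as [l|] eqn:EB.
  - simpl in hs. destruct hs as [hfin hcv].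
    assert (hg : Un_growing (fun N => sum_f_R0 (fun n => fin_part (mu M (D n))) N)).
    { intros N; pose proof (fin_part_nonneg M _ (hD (S N))) as hp; simpl; simpl in hp; lra. }
    pose proof (growing_ineq _ _ hg hcv 0%nat) as h0; simpl in h0.
    pose proof (hfin 0%nat) as hf0; simpl in hf0.
    destruct (mu M A); simpl in *; [lra | congruence].
  - destruct (mu M A); exact I.
Qed.

Lemma null_sub {X} (M : measure_space X) A B :
  measurable M A -> measurable M B -> (forall x, A x -> B x) -> mu M B = Fin 0 -> mu M A = Fin 0.
Proof.
  intros hA hB hAB h0. pose proof (mu_mono M A B hA hB hAB) as hm.
  pose proof (mu_nonneg X M A hA) as hn.
  rewrite h0 in hm. destruct (mu M A); simpl in *; [f_equal; lra | contradiction].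
Qed.

Lemma esum_zero (a : nat -> ereal) s : (forall n, a n = Fin 0) -> esum_to a s -> s = Fin 0.
Proof.
  intros ha hs.
  assert (hz : forall N, sum_f_R0 (fun n => fin_part (a n)) N = 0).
  { induction N; simpl; rewrite ha; simpl; lra. }
  destruct s as [l|]; simpl in hs.
  - destruct hs as [_ hcv]. f_equal.
    apply (UL_sequence _ _ _ hcv). intros eps he. exists 0%nat. intros n _.
    rewrite hz. unfold R_dist. rewrite Rminus_0_r, Rabs_R0. lra.
  - destruct hs as [[n hn]|[_ hc]].
    + rewrite ha in hn; discriminate.
    + destruct (hc 0) as [N hN]. specialize (hN N (le_n N)). rewrite hz in hN. lra.
Qed.

Lemma least_ex (P : nat -> Prop) n : P n -> exists m, P m /\ forall k, (k < m)%nat -> ~ P k.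
Proof.
  induction n as [n IH] using (well_founded_induction Wf_nat.lt_wf). intros Pn.
  destruct (classic (exists k, (k < n)%nat /\ P k)) as [[k [hk pk]]|h].
  - exact (IH k hk pk).
  - exists n; split; auto. intros k hk pk; apply h; eauto.
Qed.

Lemma null_union {X} (M : measure_space X) (N : nat -> X -> Prop) :
  (forall n, measurable M (N n)) -> (forall n, mu M (N n) = Fin 0) ->
  measurable M (fun x => exists n, N n x) /\ mu M (fun x => exists n, N n x) = Fin 0.
Proof.
  intros hN zN.
  assert (hU : measurable M (fun x => exists n, N n x)) by (apply measurable_union; auto).
  split; [exact hU|].
  pose (D := fun n x => N n x /\ forall k, (k < n)%nat -> ~ N k x).
  assert (hD : forall n, measurable M (D n)).
  { intros n.
    assert (hE : measurable M (fun x => exists k, (k < n)%nat /\ N k x)).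
    { apply measurable_union. intros k. destruct (Compare_dec.lt_dec k n) as [h|h].
      - replace (fun x => (k < n)%nat /\ N k x) with (N k) by (apply set_ext; intuition). auto.
      - replace (fun x => (k < n)%nat /\ N k x) with (fun _ : X => False) by (apply set_ext; intuition).
        apply measurable_empty. }
    pose proof (meas_inter M _ _ (hN n) (measurable_compl X M _ hE)) as h.
    replace (D n) with (fun x => N n x /\ ~ (exists k, (k < n)%nat /\ N k x)); auto.
    apply set_ext; intros x; unfold D; firstorder. }
  assert (hdis : forall n m x, n <> m -> D n x -> D m x -> False).
  { intros n m x hnm [h1 h2] [h3 h4]. destruct (Nat.lt_total n m) as [h|[h|h]].
    - exact (h4 n h h1). - contradiction. - exact (h2 m h h3). }
  pose proof (mu_sigma_additive X M D hD hdis) as hs.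
  assert (E : (fun x => exists n, D n x) = (fun x => exists n, N n x)).
  { apply set_ext; intros x; split.
    - intros [n [h _]]; eauto.
    - intros [n h]. destruct (least_ex (fun k => N k x) n h) as [m [h1 h2]]. exists m; split; auto. }
  rewrite E in hs. apply (esum_zero _ _ (fun n => null_sub M _ _ (hD n) (hN n) (fun x h => proj1 h) (zN n)) hs).
Qed.

Lemma null_union2 {X} (M : measure_space X) A B :
  measurable M A -> measurable M B -> mu M A = Fin 0 -> mu M B = Fin 0 ->
  measurable M (fun x => A x \/ B x) /\ mu M (fun x => A x \/ B x) = Fin 0.
Proof.
  intros hA hB zA zB.
  pose (D := fun n : nat => match n with 0%nat => A | _ => B end).
  destruct (null_union M D) as [h1 h2].
  - intros [|n]; simpl; auto.
  - intros [|n]; simpl; auto.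
  - assert (E : (fun x => exists n, D n x) = (fun x => A x \/ B x)).
    { apply set_ext; intros x; split.
      - intros [[|n] h]; simpl in h; auto.
      - intros [h|h]; [exists 0%nat | exists 1%nat]; simpl; auto. }
    rewrite E in h1, h2; auto.
Qed.

Fixpoint chain {X : Type} (good : X -> (X -> Prop) -> Prop) (l : list (X * (X -> Prop))) : Prop :=
  match l with
  | nil => True
  | p :: l' => good (fst p) (snd p) /\ (forall q, In q l' -> ~ snd q (fst p)) /\ chain good l'
  end.

Fixpoint lunion {X : Type} (N0 : X -> Prop) (l : list (X * (X -> Prop))) : X -> Prop :=
  match l with nil => N0 | p :: l' => fun z => snd p z \/ lunion N0 l' z end.

Lemma inner_eq_big (a : R) : 0 <= a -> forall d, 0 < d -> exists k : nat, a < INR k * d.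
Proof.
  intros ha d hd.
  destruct (archimed_cor1 (d / (a + 1))) as [k [hk hk0]].
  { apply Rdiv_lt_0_compat; lra. }
  exists k. assert (hkp : 0 < INR k) by (apply lt_0_INR; exact hk0).
  assert (h1 : 1 < INR k * (d / (a + 1))).
  { pose proof (Rinv_r (INR k) ltac:(lra)) as hr.
    pose proof (Rmult_lt_compat_l (INR k) _ _ hkp hk). lra. }
  replace (INR k * (d / (a + 1))) with ((INR k * d) / (a + 1)) in h1 by (field; lra).
  apply (Rmult_lt_compat_r (a + 1)) in h1; [|lra].
  replace (INR k * d / (a + 1) * (a + 1)) with (INR k * d) in h1 by (field; lra). lra.
Qed.

Theorem mainTheorem6 (X : Type) (M : measure_space X)
  (H : hilbert_space) (e : X -> H) :
  nonatomic M ->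
  nonzero_measure M ->
  (exists B : R, forall x, hnorm (e x) <= B) ->
  ae M (fun x => ae M (fun y => inner (e x) (e y) = C0)) ->
  forall f : H, ae M (fun x => inner f (e x) = C0).
Proof.
  intros _ _ [B0 HB] [N0 [mN0 [zN0 HN0]]] f.
  set (b := B0 * B0 + 1).
  assert (hb : 0 < b) by (unfold b; nra).
  assert (Hv : forall x, Cre (inner (e x) (e x)) <= b).
  { intros x. specialize (HB x). unfold hnorm in HB.
    destruct (inner_pos H (e x)) as [_ hr].
    pose proof (sqrt_sqrt _ hr) as hs. pose proof (sqrt_pos (Cre (inner (e x) (e x)))).
    unfold b; nra. }
  assert (Key : forall d, 0 < d -> ae M (fun x => nsq (inner f (e x)) < d)).
  { intros d hd. apply NNPP; intro Hnot.
    pose (good := fun x Nx => measurable M Nx /\ mu M Nx = Fin 0 /\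
                   (forall y, inner (e x) (e y) <> C0 -> Nx y) /\ ~ N0 x /\ d <= nsq (inner f (e x))).
    assert (hLU : forall l, chain good l -> measurable M (lunion N0 l) /\ mu M (lunion N0 l) = Fin 0).
    { induction l as [|p l IH]; simpl; [auto|].
      intros [[h1 [h2 _]] [_ hc]]. destruct (IH hc). apply null_union2; auto. }
    assert (hLin : forall l z, ~ lunion N0 l z -> ~ N0 z /\ forall q, In q l -> ~ snd q z).
    { induction l as [|p l IH]; simpl; intros z hz.
      - split; auto.
      - destruct (IH z (fun h => hz (or_intror h))) as [h1 h2]. split; auto.
        intros q [<-|hq]; auto. }
    assert (hChain : forall k, exists l, chain good l /\ length l = k).
    { induction k as [|k [l [hc hl]]].
      - exists nil; simpl; auto.
      - destruct (hLU l hc) as [hm hz].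
        assert (hex : exists y, ~ nsq (inner f (e y)) < d /\ ~ lunion N0 l y).
        { apply NNPP; intro hne. apply Hnot. exists (lunion N0 l). split; [auto|split; auto].
          intros x hx. apply NNPP; intro hx2. apply hne; eauto. }
        destruct hex as [y [hy1 hy2]]. destruct (hLin l y hy2) as [hy0 hyq].
        destruct (classic (ae M (fun z => inner (e y) (e z) = C0))) as [[Ny [h1 [h2 h3]]]|hn];
          [|exfalso; apply hy0; apply HN0; exact hn].
        exists ((y, Ny) :: l). simpl. split; [|lia]. split; [|split; auto].
        unfold good; repeat split; auto. apply Rnot_lt_le; auto. }
    assert (hOrth : forall l, chain good l -> orth (map (fun p => e (fst p)) l)).
    { induction l as [|p l IH]; simpl; [auto|]. intros [hg [hq hc]]. split; auto.
      intros w hw. apply in_map_iff in hw. destruct hw as [q [<- hql]].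
      pose proof (hq q hql) as hnq.
      assert (hc' : chain good l) by exact hc.
      assert (hgq : good (fst q) (snd q)).
      { clear -hql hc'. induction l as [|r l IH]; simpl in *; [contradiction|].
        destruct hc' as [h1 [_ h2]]. destruct hql as [<-|h]; auto. }
      destruct hgq as [_ [_ [h3 _]]].
      assert (h0 : inner (e (fst q)) (e (fst p)) = C0) by (apply NNPP; intro hh; exact (hnq (h3 _ hh))).
      rewrite (inner_conj_sym H (e (fst q)) (e (fst p))), h0. apply C_eq; simpl; lra. }
    assert (hGe : forall l, chain good l -> forall v, In v (map (fun p => e (fst p)) l) -> d <= nsq (inner f v)).
    { intros l hc v hv. apply in_map_iff in hv. destruct hv as [q [<- hql]].
      clear -hql hc. induction l as [|r l IH]; simpl in *; [contradiction|].
      destruct hc as [h1 [_ h2]]. destruct hql as [<-|h]; auto. apply h1. }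
    destruct (inner_pos H f) as [_ hff].
    destruct (inner_eq_big (b * Cre (inner f f)) ltac:(nra) d hd) as [k hk].
    destruct (hChain k) as [l [hc hl]].
    pose proof (bessel H f (map (fun p => e (fst p)) l) b hb (hOrth l hc)) as hB.
    assert (hB' : sumsq f (map (fun p => e (fst p)) l) <= b * Cre (inner f f)).
    { apply hB. intros v hv. apply in_map_iff in hv. destruct hv as [q [<- _]]. apply Hv. }
    pose proof (sumsq_ge H f _ d (hGe l hc)) as hS.
    rewrite length_map, hl in hS. lra. }
  assert (Sel : forall n : nat, {N : X -> Prop | measurable M N /\ mu M N = Fin 0 /\
            forall x, ~ nsq (inner f (e x)) < / INR (S n) -> N x}).
  { intros n. apply constructive_indefinite_description. apply Key.
    apply Rinv_0_lt_compat, lt_0_INR; lia. }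
  pose (NN := fun n => proj1_sig (Sel n)).
  destruct (null_union M NN) as [h1 h2].
  - intros n; exact (proj1 (proj2_sig (Sel n))).
  - intros n; exact (proj1 (proj2 (proj2_sig (Sel n)))).
  - exists (fun x => exists n, NN n x). split; [auto|split; auto].
    intros x hx.
    assert (hpos : 0 < nsq (inner f (e x))).
    { destruct (Rle_lt_or_eq_dec 0 _ (nsq_nonneg (inner f (e x)))) as [h|h]; auto.
      exfalso; apply hx. unfold nsq in h. destruct (inner f (e x)) as [r i]; simpl in h.
      apply C_eq; simpl; nra. }
    destruct (archimed_cor1 _ hpos) as [[|m] [hm hm0]]; [lia|].
    exists m. apply (proj2 (proj2 (proj2_sig (Sel m)))). lra.
Qed.
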